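(* Let $G$ be an ordered graph, and let $S,T\subseteq E(G)$ with $|S|>|T|$. Then there is an edge $e\in S\setminus T$ with $$\mathrm{h}_{G\setminus T}(e)\ge \min_{f\in S}\mathrm{h}_G(f).$$
   Context: An ordered graph is a finite simple graph $G$ equipped with a total order $\le_G$ on $E(G)$ and a total order $\le^V_G$ on $V(G)$; subgraphs inherit these orders. Let $\mathbb N=\{1,2,\dots\}$. Define $\preceq_{\mathrm{lex}}$ on $\mathbb N\times V(G)$ by $(i,v)\preceq_{\mathrm{lex}}(i',v')$ iff $i<i'$, or $i=i'$ and $v\le^V_G v'$. The height table $\mathrm{HT}(G)$ is a partially filled array indexed by $\mathbb N\times V(G)$, built by going through all $(i,v)$ in $\preceq_{\mathrm{lex}}$-increasing order and setting the entry at $(i,v)$ to be the $\le_G$-largest edge containing $v$ not yet entered into the table (blank if none remain). Every edge is entered exactly once; $\mathrm{ht}_G(e)=(\mathrm{h}_G(e),\mathrm{v}_G(e))$ is the position of $e$, with $\mathrm{h}_G(e)$ its row (height) and $\mathrm{v}_G(e)$ its column. $G\setminus T$ denotes the graph on $V(G)$ with edge set $E(G)\setminus T$. *)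

(* Defs.v *)
From mathcomp Require Import all_boot.
Set Implicit Arguments. Unset Strict Implicit. Unset Printing Implicit Defensive.

(* An ordered graph on a finite vertex type V:
   - edges: E : {set {set V}}, every edge a 2-element set (finite simple graph);
   - vertex order: given by an injective key rv : V -> nat (u <=^V v iff rv u <= rv v);
   - edge order:   given by a key ke : {set V} -> nat, injective on E
                   (e <=_G f iff ke e <= ke f).
   Subgraphs (e.g. G \ T, with edge set E :\: T) inherit rv and ke. *)

Section HeightTable.
Variable V : finType.
Variable rv : V -> nat.
Variable ke : {set V} -> nat.

Definition vorder : seq V := sort (fun x y => rv x <= rv y) (enum V).

Definition maxedge (R : {set {set V}}) (v : V) : option {set V} :=
  [pick e in R | (v \in e) && [forall f in R, (v \in f) ==> (ke f <= ke e)]].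

(* process the row i: go through the vertices in order; returns the remaining
   edges and the entries (edge, row, column) filled in this row *)
Fixpoint rowpass (i : nat) (vs : seq V) (R : {set {set V}})
  : {set {set V}} * seq ({set V} * nat * V) :=
  match vs with
  | [::] => (R, [::])
  | v :: vs' =>
    match maxedge R v with
    | None => rowpass i vs' R
    | Some e => let p := rowpass i vs' (R :\ e) in (p.1, ((e, i), v) :: p.2)
    end
  end.

Fixpoint allrows (k i : nat) (R : {set {set V}}) : seq ({set V} * nat * V) :=
  match k with
  | 0 => [::]
  | k'.+1 => let p := rowpass i vorder R in p.2 ++ allrows k' i.+1 p.1
  end.

(* all entries of the height table HT(G) of the graph with edge set E
   (rows are numbered from 1; #|E| rows suffice since every nonempty row
   removes at least one edge) *)
Definition HT (E : {set {set V}}) : seq ({set V} * nat * V) := allrows #|E| 1 E.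

Definition hgt (E : {set {set V}}) (e : {set V}) : nat :=
  let s := HT E in nth 0 [seq x.1.2 | x <- s] (index e [seq x.1.1 | x <- s]).

End HeightTable.

(* Main.v *)
Require Import Defs.
From mathcomp Require Import all_boot zify.
Set Implicit Arguments. Unset Strict Implicit. Unset Printing Implicit Defensive.

Section Aux.
Variable V : finType.
Variable rv : V -> nat.
Variable ke : {set V} -> nat.
Variable E : {set {set V}}.
Hypothesis hE : forall e, e \in E -> #|e| = 2.
Hypothesis hke : {in E &, injective ke}.

Lemma maxedgeS R v e : maxedge ke R v = Some e ->
  [/\ e \in R, v \in e & forall f, f \in R -> v \in f -> ke f <= ke e].
Proof.
rewrite /maxedge; case: pickP => // x /andP[xR /andP[vx /forallP H]] [<-].
split=> // f fR vf; move: (H f); rewrite fR vf; done.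
Qed.

Lemma maxedgeN R v : maxedge ke R v = None -> forall f, f \in R -> v \notin f.
Proof.
move=> H f fR; apply/negP => vf.
have [g /andP[gR vg] gmax] := @arg_maxnP _ f (fun g => (g \in R) && (v \in g)) ke
   (introT andP (conj fR vf)).
move: H; rewrite /maxedge; case: pickP => [//|/(_ g)].
rewrite gR vg /= => /negP NF _; apply: NF; apply/forallP => h; apply/implyP => hR; apply/implyP => vh.
by apply: gmax; rewrite hR vh.
Qed.

Definition step (R : {set {set V}}) (v : V) :=
  match maxedge ke R v with None => R | Some e => R :\ e end.

Lemma rowpass1 i vs R : (rowpass ke i vs R).1 = foldl step R vs.
Proof.
elim: vs R => //= v vs IH R; rewrite /step; case: (maxedge ke R v) => [e|] /=;
by rewrite IH.
Qed.

Definition rowrem R := foldl step R (vorder rv).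

Lemma step_sub R v : step R v \subset R.
Proof. rewrite /step; case: maxedge => [e|] //; exact: subD1set. Qed.

Lemma fold_sub vs R : foldl step R vs \subset R.
Proof.
elim: vs R => //= v vs IH R; exact: subset_trans (IH _) (step_sub _ _).
Qed.

Lemma iter_sub k R : iter k rowrem R \subset R.
Proof.
elim: k => //= k IH; exact: subset_trans (fold_sub _ _) IH.
Qed.

Lemma allrows_cat a b i R : allrows rv ke (a + b) i R =
  allrows rv ke a i R ++ allrows rv ke b (i + a) (iter a rowrem R).
Proof.
elim: a i R => [|a IH] i R /=; first by rewrite addn0.
by rewrite IH rowpass1 catA addnS -addSn -[rowrem (iter a rowrem R)]/(iter a.+1 rowrem R) iterSr.
Qed.

Lemma rp_mem i vs (R : {set {set V}}) x : x \in (rowpass ke i vs R).2 ->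
  [/\ x.1.2 = i, x.1.1 \in R & x.1.1 \notin (rowpass ke i vs R).1].
Proof.
elim: vs R => //= v vs IH R; case H: (maxedge ke R v) => [e|] /=.
  have [eR ve _] := maxedgeS H.
  rewrite inE => /orP[/eqP -> /= | xin].
    split => //; rewrite rowpass1; apply/negP => /(subsetP (fold_sub _ _)).
    by rewrite !inE eqxx.
  have [-> xR ->] := IH _ xin; split => //; move: xR; rewrite inE => /andP[].
  done.
exact: IH.
Qed.

Lemma rp_cov i vs (R : {set {set V}}) e : e \in R -> e \notin (rowpass ke i vs R).1 ->
  e \in [seq x.1.1 | x <- (rowpass ke i vs R).2].
Proof.
elim: vs R => //= [R -> //|v vs IH R eR]; case H: (maxedge ke R v) => [a|] /=.
  rewrite inE; case: eqVneq => //= ea nin; apply: IH nin.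
  by rewrite !inE ea.
exact: IH.
Qed.

Lemma iterrr k R : rowrem (iter k rowrem R) = iter k rowrem (rowrem R).
Proof. by rewrite -iterS iterSr. Qed.

Lemma ar_mem k i (R : {set {set V}}) x : x \in allrows rv ke k i R ->
  [/\ i <= x.1.2 < i + k, x.1.1 \in R & x.1.1 \notin iter k rowrem R].
Proof.
elim: k i R => //= k IH i R; rewrite iterrr mem_cat => /orP[xin|xin].
  have [-> xR] := rp_mem xin; rewrite rowpass1 => nin.
  split => //; first by rewrite leqnn addnS ltnS leq_addr.
  apply: contra nin => /(subsetP (iter_sub k (rowrem R))); done.
have [/andP[h1 h2] xR nin] := IH _ _ xin; split.
- by rewrite (ltnW h1) addnS -addSn.
- by move: xR; rewrite rowpass1 => /(subsetP (fold_sub _ _)).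
- by move: nin; rewrite rowpass1.
Qed.

Lemma ar_cov k i (R : {set {set V}}) e : e \in R -> e \notin iter k rowrem R ->
  e \in [seq x.1.1 | x <- allrows rv ke k i R].
Proof.
elim: k i R => [|k IH] i R eR /=; first by rewrite eR.
rewrite map_cat mem_cat => nin.
case: (boolP (e \in rowrem R)) => [er|er].
  by apply/orP; right; rewrite rowpass1; apply: IH => //; rewrite -iterrr.
by apply/orP; left; apply: rp_cov => //; rewrite rowpass1.
Qed.

Lemma fold_lt v vs (R : {set {set V}}) e : v \in vs -> e \in R -> v \in e ->
  #|foldl step R vs| < #|R|.
Proof.
elim: vs R => //= w vs IH R; rewrite inE => vin eR ve.
case H: (maxedge ke R w) => [a|].
  have [aR _ _] := maxedgeS H.
  have -> : step R w = R :\ a by rewrite /step H.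
  apply: (leq_ltn_trans (subset_leq_card (fold_sub vs (R :\ a)))).
  by rewrite [X in _ < X](cardsD1 a) aR.
have -> : step R w = R by rewrite /step H.
case/orP: vin => [/eqP vw|vin]; last exact: IH vin eR ve.
by move: (maxedgeN H eR); rewrite -vw ve.
Qed.

Lemma rowrem_lt (R : {set {set V}}) : R \subset E -> R != set0 -> #|rowrem R| < #|R|.
Proof.
move=> RE /set0Pn[e eR].
have : (0 < #|e|) by rewrite hE ?(subsetP RE).
rewrite card_gt0 => /set0Pn[v ve].
apply: (@fold_lt v _ _ e) => //.
by rewrite /vorder mem_sort mem_enum.
Qed.

Lemma iter_empty k (R : {set {set V}}) : R \subset E -> #|R| <= k -> iter k rowrem R = set0.
Proof.
elim: k R => [|k IH] R RE hk.
  by apply/eqP; rewrite -cards_eq0 -leqn0.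
rewrite iterSr; case: (eqVneq R set0) => [R0|Rn0].
  apply: IH; last by rewrite (@leq_trans #|R|) ?subset_leq_card ?fold_sub // R0 cards0.
  exact: subset_trans (fold_sub _ _) RE.
apply: IH; first exact: subset_trans (fold_sub _ _) RE.
by rewrite -ltnS (leq_trans (rowrem_lt RE Rn0)).
Qed.

Definition ro (s : seq ({set V} * nat * V)) e :=
  nth 0 [seq x.1.2 | x <- s] (index e [seq x.1.1 | x <- s]).

Lemma ro_in s e : e \in [seq x.1.1 | x <- s] ->
  exists2 x, x \in s & x.1.1 = e /\ x.1.2 = ro s e.
Proof.
move=> ein; have := ein; move/mapP => [x1 x1in _].
have jlt : index e [seq x.1.1 | x <- s] < size s by rewrite -(size_map (fun x => x.1.1)) index_mem.
exists (nth x1 s (index e [seq x.1.1 | x <- s])); first exact: mem_nth.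
split; last by rewrite /ro (nth_map x1).
by rewrite -(nth_map x1 x1.1.1 (fun x => x.1.1) jlt) nth_index.
Qed.

Lemma ro_catl s1 s2 e : e \in [seq x.1.1 | x <- s1] -> ro (s1 ++ s2) e = ro s1 e.
Proof.
move=> ein; rewrite /ro !map_cat index_cat ein nth_cat size_map.
by rewrite -(size_map (fun x => x.1.1)) index_mem ein.
Qed.

Lemma ro_catr s1 s2 e : e \notin [seq x.1.1 | x <- s1] -> ro (s1 ++ s2) e = ro s2 e.
Proof.
move=> ein; rewrite /ro !map_cat index_cat (negbTE ein) nth_cat !size_map.
by rewrite ltnNge leq_addr /= addKn.
Qed.

Lemma hgtE (R : {set {set V}}) e : hgt rv ke R e = ro (allrows rv ke #|R| 1 R) e.
Proof. by []. Qed.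

Lemma hgt_low (R : {set {set V}}) k e : R \subset E -> e \in R ->
  e \notin iter k rowrem R -> hgt rv ke R e < k.+1.
Proof.
move=> RE eR nin; rewrite hgtE.
case: (leqP k #|R|) => hk.
  rewrite -(subnKC hk) allrows_cat.
  have ein := ar_cov 1 eR nin.
  rewrite ro_catl //; have [x xin [_ <-]] := ro_in ein.
  by have [/andP[_ ]] := ar_mem xin.
have ein : e \in [seq x.1.1 | x <- allrows rv ke #|R| 1 R].
  by apply: ar_cov eR _; rewrite iter_empty // inE.
have [x xin [_ <-]] := ro_in ein.
have [/andP[_ h] _ _] := ar_mem xin.
by apply: leq_trans h _; rewrite add1n ltnS ltnW.
Qed.

Lemma hgt_high (R : {set {set V}}) k e : R \subset E -> e \in R ->
  e \in iter k rowrem R -> k.+1 <= hgt rv ke R e.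
Proof.
move=> RE eR ein; rewrite hgtE.
case: (leqP #|R| k) => hk.
  by move: ein; rewrite iter_empty // inE.
rewrite -(subnKC (ltnW hk)) allrows_cat.
rewrite ro_catr; last first.
  apply/mapP => [[x xin xe]]; have [_ _] := ar_mem xin.
  by rewrite -xe ein.
have ein2 : e \in [seq x.1.1 | x <- allrows rv ke (#|R| - k) (1 + k) (iter k rowrem R)].
  by apply: ar_cov; rewrite // -iterD subnK ?(ltnW hk) // iter_empty // inE.
have [x xin [_ <-]] := ro_in ein2.
by have [/andP[h _] _ _] := ar_mem xin.
Qed.

Definition rel (R R' : {set {set V}}) := R' \subset R /\ exists y, R \subset y |: R'.

Lemma maxedge_same (R R' : {set {set V}}) v a : R \subset E -> R' \subset R ->
  maxedge ke R v = Some a -> a \in R' -> maxedge ke R' v = Some a.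
Proof.
move=> RE R'R H aR'; have [aR va amax] := maxedgeS H.
case H': (maxedge ke R' v) => [b|]; last by move: (maxedgeN H' aR'); rewrite va.
have [bR' vb bmax] := maxedgeS H'.
have bR := subsetP R'R _ bR'.
congr Some; apply: hke; rewrite ?(subsetP RE) //.
by apply/eqP; rewrite eqn_leq amax // bmax.
Qed.

Lemma step_del (R : {set {set V}}) v : exists z, R \subset z |: step R v.
Proof.
rewrite /step; case: maxedge => [a|]; last by exists set0; apply: subsetUr.
by exists a; apply/subsetP => x xR; rewrite !inE; case: eqVneq.
Qed.

Lemma step_rel (R R' : {set {set V}}) v : R \subset E -> rel R R' -> rel (step R v) (step R' v).
Proof.
move=> RE [R'R [y RyR']].
case H: (maxedge ke R v) => [a|]; last first.
  have H' : maxedge ke R' v = None.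
    case H': (maxedge ke R' v) => [b|] //.
    have [bR' vb _] := maxedgeS H'.
    by move: (maxedgeN H (subsetP R'R _ bR')); rewrite vb.
  by rewrite /step H H'; split => //; exists y.
have [aR _ _] := maxedgeS H.
case: (boolP (a \in R')) => aR'.
  rewrite /step H (maxedge_same RE R'R H aR'); split.
    by apply: setSD.
  exists y; apply/subsetP => x /[!inE] /andP[xa xR].
  by move: (subsetP RyR' x xR); rewrite !inE xa.
have hR'R : R' \subset R :\ a.
  by apply/subsetP => x xR'; rewrite !inE (subsetP R'R _ xR') andbT; apply: contraNneq aR' => <-.
have hRa : R :\ a \subset R'.
  apply/subsetP => x /[!inE] /andP[xa xR]; move: (subsetP RyR' x xR); rewrite !inE.
  case/orP => [/eqP xy|//]; move: (subsetP RyR' a aR); rewrite !inE (negbTE aR') orbF.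
  by move/eqP => ay; move: xa; rewrite xy ay eqxx.
have [z Hz] := step_del R' v.
rewrite {1}/step H; split.
  exact: subset_trans (step_sub _ _) hR'R.
by exists z; apply: subset_trans hRa Hz.
Qed.

Lemma fold_rel vs (R R' : {set {set V}}) : R \subset E -> rel R R' ->
  rel (foldl step R vs) (foldl step R' vs).
Proof.
elim: vs R R' => //= v vs IH R R' RE hr; apply: IH; last exact: step_rel.
exact: subset_trans (step_sub _ _) RE.
Qed.

Lemma iter_rel k (R R' : {set {set V}}) : R \subset E -> rel R R' ->
  rel (iter k rowrem R) (iter k rowrem R').
Proof.
move=> RE hr; elim: k => //= k IH; apply: fold_rel IH.
exact: subset_trans (iter_sub _ _) RE.
Qed.

Lemma step_rm (R : {set {set V}}) t v : R \subset E -> t \in step R v ->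
  step (R :\ t) v = step R v :\ t.
Proof.
move=> RE; case H: (maxedge ke R v) => [a|]; last first.
  have H' : maxedge ke (R :\ t) v = None.
    case H': (maxedge ke (R :\ t) v) => [b|] //.
    have [bR' vb _] := maxedgeS H'.
    by move: (maxedgeN H (subsetP (subD1set R t) _ bR')); rewrite vb.
  by rewrite /step H H'.
rewrite /step H => tin.
have aR' : a \in R :\ t.
  move: tin; rewrite !inE => /andP[ta tR]; rewrite eq_sym ta; by case: (maxedgeS H).
rewrite (maxedge_same RE (subD1set R t) H aR').
by apply/setP => x; rewrite !inE; case: (x == a); case: (x == t).
Qed.

Lemma fold_rm vs (R : {set {set V}}) t : R \subset E -> t \in foldl step R vs ->
  foldl step (R :\ t) vs = foldl step R vs :\ t.
Proof.
elim: vs R => //= v vs IH R RE tin.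
have tin1 : t \in step R v by apply: (subsetP (fold_sub vs _)).
rewrite step_rm // IH //; exact: subset_trans (step_sub _ _) RE.
Qed.

Lemma iter_rm k (R : {set {set V}}) t : R \subset E -> t \in iter k rowrem R ->
  iter k rowrem (R :\ t) = iter k rowrem R :\ t.
Proof.
move=> RE; elim: k => //= k IH tin.
have tin1 : t \in iter k rowrem R by apply: (subsetP (fold_sub (vorder rv) (iter k rowrem R))).
rewrite IH //; apply: fold_rm => //; exact: subset_trans (iter_sub _ _) RE.
Qed.

Lemma setD_split (R X : {set {set V}}) x : x \in X -> R :\: X = (R :\ x) :\: (X :\ x).
Proof.
move=> xX; apply/setP => z; rewrite !inE; case: eqVneq => [->|] //=.
by rewrite xX.
Qed.

Lemma lemC k n : forall (X R : {set {set V}}), #|X| = n -> R \subset E ->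
  X \subset iter k rowrem R -> iter k rowrem (R :\: X) = iter k rowrem R :\: X.
Proof.
elim: n => [|n IH] X R hX RE XF.
  by move/eqP: hX; rewrite cards_eq0 => /eqP ->; rewrite !setD0.
have : X != set0 by rewrite -card_gt0 hX.
case/set0Pn => x xX.
have xF := subsetP XF x xX.
rewrite (setD_split R xX) IH.
- by rewrite iter_rm // -setD_split.
- by move: hX; rewrite (cardsD1 x) xX add1n => -[].
- exact: subset_trans (subD1set R x) RE.
- rewrite iter_rm //; apply/subsetP => z; rewrite !inE => /andP[-> zX] /=.
  exact: (subsetP XF).
Qed.

Lemma lemA k (R : {set {set V}}) t : R \subset E ->
  exists z, (R :\ t) :\: iter k rowrem (R :\ t) \subset z |: (R :\: iter k rowrem R).
Proof.
move=> RE.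
have hr : rel R (R :\ t).
  split; first exact: subD1set.
  by exists t; apply/subsetP => x xR; rewrite !inE xR; case: eqVneq.
have [_ [y Hy]] := iter_rel k RE hr.
exists y; apply/subsetP => x; rewrite !inE => /andP[xn /andP[_ xR]].
case: (boolP (x \in iter k rowrem R)) => xF; last by rewrite xR orbT.
by move: (subsetP Hy x xF); rewrite !inE (negbTE xn) orbF => ->.
Qed.

Lemma lemD k n : forall (Y R : {set {set V}}), #|Y| <= n -> R \subset E ->
  exists Z : {set {set V}}, #|Z| <= n /\
    (R :\: Y) :\: iter k rowrem (R :\: Y) \subset Z :|: (R :\: iter k rowrem R).
Proof.
elim: n => [|n IH] Y R hY RE.
  move: hY; rewrite leqn0 cards_eq0 => /eqP ->; exists set0.
  by rewrite cards0 setD0 set0U.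
case: (eqVneq Y set0) => [->|].
  by exists set0; rewrite cards0 setD0 set0U.
case/set0Pn => y yY.
have RE' : R :\ y \subset E by exact: subset_trans (subD1set R y) RE.
have hY' : #|Y :\ y| <= n by move: hY; rewrite (cardsD1 y) yY.
have [Z [hZ HZ]] := IH _ _ hY' RE'.
have [z Hz] := lemA k y RE.
exists (z |: Z); split.
  by rewrite cardsU1; apply: leq_trans (leq_add (leq_b1 _) hZ) _.
rewrite (setD_split R yY); apply: subset_trans HZ _.
apply/subsetP => x; rewrite inE => /orP[xZ|xL]; first by rewrite !inE xZ orbT.
move: (subsetP Hz x xL); rewrite !inE => /orP[->//|->]; by rewrite !orbT.
Qed.

End Aux.

Theorem lemma3p2 (V : finType) (rv : V -> nat) (ke : {set V} -> nat)
    (E : {set {set V}})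
    (hE : forall e, e \in E -> #|e| = 2)
    (hrv : injective rv)
    (hke : {in E &, injective ke})
    (S T : {set {set V}})
    (hS : S \subset E) (hT : T \subset E) (hST : #|T| < #|S|) :
  exists2 e, e \in S :\: T &
    exists2 f, f \in S & hgt rv ke E f <= hgt rv ke (E :\: T) e.
Proof.
have S0 : S != set0 by rewrite -card_gt0 (leq_ltn_trans (leq0n _) hST).
case/set0Pn: S0 => f1 f1S.
have [f0 f0S f0min] := @arg_minnP _ f1 (fun f => f \in S) (hgt rv ke E) f1S.
case: (boolP [exists e in S :\: T, hgt rv ke E f0 <= hgt rv ke (E :\: T) e])
  => [/existsP [e /andP[eST he]]|Hn].
  by exists e => //; exists f0.
exfalso.
have Hlt : forall e, e \in S :\: T -> hgt rv ke (E :\: T) e < hgt rv ke E f0.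
  move=> e eST; rewrite ltnNge; apply: contra Hn => he; apply/existsP; exists e.
  by rewrite eST he.
have c1 := cardsID T S.
have c2 := cardsID S T.
have c3 : #|S :&: T| <= #|T| by apply: subset_leq_card; apply: subsetIr.
have STn : 0 < #|S :\: T| by lia.
move: STn; rewrite card_gt0 => /set0Pn [e0 e0ST].
have := Hlt e0 e0ST; case m: (hgt rv ke E f0) => [|k] // _.
have SF : S \subset iter k (rowrem rv ke) E.
  apply/subsetP => f fS; apply/negPn/negP => nin.
  have := hgt_low hE (subxx E) (subsetP hS f fS) nin.
  by rewrite -m ltnNge f0min.
set X := S :&: T; set Y := T :\: S.
have ES : E :\: X \subset E by apply: subsetDl.
have FX : iter k (rowrem rv ke) (E :\: X) = iter k (rowrem rv ke) E :\: X.
  apply: (lemC hke (erefl _)) => //.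
  exact: subset_trans (subsetIl S T) SF.
have [Z [hZ HZ]] := lemD rv hke k (leqnn #|Y|) ES.
have EXY : E :\: X :\: Y = E :\: T.
  apply/setP => x; rewrite !inE; case: (x \in S); case: (x \in T) => //=.
rewrite EXY in HZ.
have SZ : S :\: T \subset Z.
  apply/subsetP => e eST.
  have eS : e \in S by move: eST; rewrite inE => /andP[].
  have eT : e \notin T by move: eST; rewrite inE => /andP[].
  have eE := subsetP hS e eS.
  have eET : e \in E :\: T by rewrite inE; apply/andP.
  have eL : e \in (E :\: T) :\: iter k (rowrem rv ke) (E :\: T).
    rewrite inE eET andbT; apply/negP => ein.
    have := hgt_high hE (subsetDl E T) eET ein.
    by rewrite leqNgt -m Hlt.
  move: (subsetP HZ e eL); rewrite inE => /orP[//|].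
  rewrite FX !inE (subsetP SF e eS) eS (negbTE eT) /=.
  done.
have := subset_leq_card SZ.
rewrite [T :&: S]setIC in c2; rewrite /Y in hZ.
lia.
Qed.
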